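(* Let $\mathbf A$ be a pseudo-Kleene lattice. Then $\mathbf A$ is super-paraorthomodular if and only if, for all $x,y\in A$ with $x\leq y$, the elements $\pi_{0_{x,y}}(x)$ and $\pi_{0_{x,y}}(y)$ generate a Boolean subalgebra of $\mathbf{Local}(x,y)$.
   Context: A pseudo-Kleene lattice is an algebra $(A,\land,\lor,{}',0,1)$ that is a bounded lattice with an antitone involution ${}'$ ($x\leq y\Rightarrow y'\leq x'$, $x''=x$) satisfying $x\land x'\leq y\lor y'$. It is super-paraorthomodular if for all $x,y$: (SP1) $x\leq y$ and $x'\land y=(x\land x')\lor(y\land y')$ imply $y\land(x\lor x')=x\lor(y\land y')$; (SP2) $x\leq y$ implies $(x\land x')\lor(y\land y')=(x'\land y)\land(x'\land y)'$. For $x,y\in A$: $0_{x,y}=(x\land x')\lor(y\land y')$, $1_{x,y}=(x\lor x')\land(y\lor y')$, and $\pi_z(w)=(w\land(z\lor z'))\lor(z\land z')$. $\mathbf{Local}(x,y)$ is the pseudo-Kleene lattice on the interval $[0_{x,y},1_{x,y}]$ with $\land,\lor,{}'$ inherited from $\mathbf A$ and bounds $0_{x,y},1_{x,y}$. A Boolean subalgebra of $\mathbf{Local}(x,y)$ is a subalgebra (closed under $\land,\lor,{}'$, containing $0_{x,y},1_{x,y}$) that is a distributive lattice in which $u\land u'=0_{x,y}$ for all its elements $u$. *)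

(* Defs.v *)
From HB Require Import structures.
From mathcomp Require Import all_boot all_order.
Set Implicit Arguments. Unset Strict Implicit. Unset Printing Implicit Defensive.
Import Order.LTheory.
Local Open Scope order_scope.

Section PK.
Context {disp : Order.disp_t} {T : tbLatticeType disp} (c : T -> T).

Definition pseudo_kleene : Prop :=
  (forall x y : T, x <= y -> c y <= c x) /\
  (forall x : T, c (c x) = x) /\
  (forall x y : T, x `&` c x <= y `|` c y).

Definition zero_xy (x y : T) : T := (x `&` c x) `|` (y `&` c y).
Definition one_xy (x y : T) : T := (x `|` c x) `&` (y `|` c y).

Definition pi_ (z w : T) : T := (w `&` (z `|` c z)) `|` (z `&` c z).

Definition super_paraorthomodular : Prop :=
  (forall x y : T, x <= y -> c x `&` y = zero_xy x y ->
       y `&` (x `|` c x) = x `|` (y `&` c y)) /\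
  (forall x y : T, x <= y ->
       zero_xy x y = (c x `&` y) `&` c (c x `&` y)).

Inductive gen_local (x y a b : T) : T -> Prop :=
  | gen_a : gen_local x y a b a
  | gen_b : gen_local x y a b b
  | gen_0 : gen_local x y a b (zero_xy x y)
  | gen_1 : gen_local x y a b (one_xy x y)
  | gen_meet u v : gen_local x y a b u -> gen_local x y a b v ->
                   gen_local x y a b (u `&` v)
  | gen_join u v : gen_local x y a b u -> gen_local x y a b v ->
                   gen_local x y a b (u `|` v)
  | gen_compl u : gen_local x y a b u -> gen_local x y a b (c u).

Definition boolean_subalgebra_of_local (x y : T) (S : T -> Prop) : Prop :=
  (forall u, S u -> zero_xy x y <= u /\ u <= one_xy x y) /\
  S (zero_xy x y) /\ S (one_xy x y) /\
  (forall u v, S u -> S v -> S (u `&` v) /\ S (u `|` v)) /\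
  (forall u, S u -> S (c u)) /\
  (forall u v w, S u -> S v -> S w ->
       u `&` (v `|` w) = (u `&` v) `|` (u `&` w)) /\
  (forall u, S u -> u `&` c u = zero_xy x y).

End PK.

(* Main.v *)
Require Import Defs.
From HB Require Import structures.
From mathcomp Require Import all_boot all_order.
Import Order.LTheory.
Local Open Scope order_scope.

Ltac lat n :=
  lazymatch n with 0 => fail | S ?m =>
  match goal with
  | |- is_true (_ <= _ `&` _) => rewrite lexI; apply/andP; split; lat n
  | |- is_true (_ `|` _ <= _) => rewrite leUx; apply/andP; split; lat n
  | |- _ => first [ exact: lexx
      | apply: leIxl; lat m | apply: leIxr; lat m
      | apply: lexUl; lat m | apply: lexUr; lat m
      | match goal with H : is_true (?p <= ?q) |- is_true (?p <= _) => apply: (le_trans H); lat m end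
      | match goal with H : is_true (?p <= ?q) |- is_true (_ <= ?q) => apply: (le_trans _ H); lat m end ]
  end end.

Ltac latE := apply/le_anti/andP; split; lat 6.

Lemma cI {disp} {T : tbLatticeType disp} {c : T -> T}
  (Hanti : forall x y : T, x <= y -> c y <= c x) (Hinv : forall x, c (c x) = x)
  (p q : T) : c (p `&` q) = c p `|` c q.
Proof.
apply/le_anti/andP; split; last by rewrite leUx !Hanti ?leIl ?leIr.
rewrite -[X in _ <= X]Hinv; apply: (Hanti).
rewrite lexI; apply/andP; split.
  by rewrite -[X in _ <= X](Hinv p); apply: (Hanti); exact: leUl.
by rewrite -[X in _ <= X](Hinv q); apply: (Hanti); exact: leUr.
Qed.

Lemma cU {disp} {T : tbLatticeType disp} {c : T -> T}
  (Hanti : forall x y : T, x <= y -> c y <= c x) (Hinv : forall x, c (c x) = x)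
  (p q : T) : c (p `|` q) = c p `&` c q.
Proof.
by rewrite -{1}(Hinv p) -{1}(Hinv q) -(cI Hanti Hinv) Hinv.
Qed.

Lemma t disp (T : tbLatticeType disp) (x y nx ny : T) (h1 : x <= y) (h2 : ny <= nx) :
  ((x `&` nx) `|` (y `&` ny)) <= nx `&` (ny `|` y).
Proof. lat 6. Qed.

Definition aa {disp} {T : tbLatticeType disp} (c : T -> T) (x y : T) := x `|` (y `&` c y).
Definition bb {disp} {T : tbLatticeType disp} (c : T -> T) (x y : T) := y `&` (x `|` c x).
Definition ww {disp} {T : tbLatticeType disp} (c : T -> T) (x y : T) := c x `&` y.

Ltac nrm Hanti Hinv := rewrite /aa /bb /ww /zero_xy /one_xy /pi_; repeat (rewrite (cI Hanti Hinv) || rewrite (cU Hanti Hinv) || rewrite Hinv).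

Lemma basic {disp} {T : tbLatticeType disp} {c : T -> T}
  (Hanti : forall x y : T, x <= y -> c y <= c x) (Hinv : forall x, c (c x) = x)
  (x y : T) (hxy : x <= y) :
  [/\ zero_xy c x y <= c (zero_xy c x y), c (zero_xy c x y) = one_xy c x y,
      pi_ c (zero_xy c x y) x = aa c x y, pi_ c (zero_xy c x y) y = bb c x y &
      [/\ bb c x y `&` c (aa c x y) = ww c x y, aa c x y <= bb c x y &
          zero_xy c x y <= aa c x y]].
Proof.
have hy := Hanti _ _ hxy.
split; try split; nrm Hanti Hinv; try latE; try lat 6.

Qed.

Lemma K2 {disp} {T : tbLatticeType disp} {c : T -> T}
  (Hanti : forall x y : T, x <= y -> c y <= c x) (Hinv : forall x, c (c x) = x)
  (Hsp : super_paraorthomodular c)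
  (x y : T) (hxy : x <= y) : y `&` (x `|` c y) = x `|` (y `&` c y).
Proof.
case: Hsp => Hsp1 Hsp2.
have hy := Hanti _ _ hxy.
have [zl _ _ _ _] := basic Hanti Hinv _ _ hxy.
set q := y `&` (x `|` c y).
have E2 := Hsp2 x y hxy.
have hxq : x <= q by rewrite /q; lat 6.
have Ecq : c x `&` q = zero_xy c x y.
  rewrite E2 (cI Hanti Hinv) Hinv /q; latE.
have Z1 : zero_xy c x q = zero_xy c x y.
  by rewrite (Hsp2 x q hxq) Ecq; apply/meet_idPl.
have := Hsp1 x q hxq; rewrite Z1 => /(_ Ecq).
have hq1 : q <= x `|` c x by rewrite /q; lat 6.
rewrite (meet_idPl hq1) => Eq.
apply/le_anti/andP; split; last by rewrite /q; lat 6.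
rewrite {1}Eq leUx lexUl //=.
apply: (le_trans (_ : q `&` c q <= zero_xy c x y)).
  by rewrite -Z1 /zero_xy leUr.
rewrite /zero_xy; lat 6.
Qed.

Lemma K1 {disp} {T : tbLatticeType disp} {c : T -> T}
  (Hanti : forall x y : T, x <= y -> c y <= c x) (Hinv : forall x, c (c x) = x)
  (Hsp : super_paraorthomodular c)
  (x y : T) (hxy : x <= y) :
  aa c x y `&` c (aa c x y) = zero_xy c x y /\
  bb c x y `&` c (bb c x y) = zero_xy c x y.
Proof.
case: Hsp => Hsp1 Hsp2.
have hy := Hanti _ _ hxy.
have [zl _ _ _ [Ew hab hza]] := basic Hanti Hinv _ _ hxy.
have E := Hsp2 _ _ hab.
rewrite [c (aa c x y) `&` _]meetC Ew /ww -(Hsp2 x y hxy) in E.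
split; apply/le_anti/andP; split.
- by rewrite -E /zero_xy leUl.
- nrm Hanti Hinv; lat 6.
- by rewrite -E /zero_xy leUr.
- nrm Hanti Hinv; lat 6.
Qed.

Definition fm {disp} {T : tbLatticeType disp} (c : T -> T) (x y : T)
  (i : bool * bool * bool) : T :=
  match i with
  | (false, false, false) => zero_xy c x y
  | (true, false, false) => aa c x y
  | (false, true, false) => ww c x y
  | (false, false, true) => c (bb c x y)
  | (true, true, false) => bb c x y
  | (true, false, true) => c (ww c x y)
  | (false, true, true) => c (aa c x y)
  | (true, true, true) => c (zero_xy c x y)
  end.

Definition bm (i j : bool * bool * bool) : bool * bool * bool :=
  (i.1.1 && j.1.1, i.1.2 && j.1.2, i.2 && j.2).
Definition bn (i : bool * bool * bool) : bool * bool * bool :=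
  (~~ i.1.1, ~~ i.1.2, ~~ i.2).
Definition bj i j := bn (bm (bn i) (bn j)).

Lemma fm_n {disp} {T : tbLatticeType disp} {c : T -> T}
  (Hinv : forall x, c (c x) = x) (x y : T) i : fm c x y (bn i) = c (fm c x y i).
Proof. by case: i => [[[] []] []]; rewrite /= ?Hinv. Qed.

Lemma fm_m {disp} {T : tbLatticeType disp} {c : T -> T}
  (Hanti : forall x y : T, x <= y -> c y <= c x) (Hinv : forall x, c (c x) = x)
  (Hsp : super_paraorthomodular c)
  (x y : T) (hxy : x <= y) i j : fm c x y (bm i j) = fm c x y i `&` fm c x y j.
Proof.
have hy := Hanti _ _ hxy.
have [K1a K1b] := K1 Hanti Hinv Hsp _ _ hxy.
have K2a := K2 Hanti Hinv Hsp _ _ hxy.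
have K2b := K2 Hanti Hinv Hsp _ _ hy; rewrite Hinv in K2b.
have [zl _ _ _ [Ew hab hza]] := basic Hanti Hinv _ _ hxy.
have E2 := Hsp.2 x y hxy.
have o1 : zero_xy c x y <= ww c x y by nrm Hanti Hinv; lat 6.
have o2 : zero_xy c x y <= c (bb c x y) by nrm Hanti Hinv; lat 6.
have o3 : zero_xy c x y <= bb c x y by nrm Hanti Hinv; lat 6.
have o4 : zero_xy c x y <= c (ww c x y) by nrm Hanti Hinv; lat 6.
have o5 : zero_xy c x y <= c (aa c x y) by nrm Hanti Hinv; lat 6.
have o6 : aa c x y <= c (zero_xy c x y) by nrm Hanti Hinv; lat 6.
have o7 : ww c x y <= c (zero_xy c x y) by nrm Hanti Hinv; lat 6.
have o8 : c (bb c x y) <= c (zero_xy c x y) by nrm Hanti Hinv; lat 6.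
have o9 : bb c x y <= c (zero_xy c x y) by nrm Hanti Hinv; lat 6.
have o10 : c (ww c x y) <= c (zero_xy c x y) by nrm Hanti Hinv; lat 6.
have o11 : c (aa c x y) <= c (zero_xy c x y) by nrm Hanti Hinv; lat 6.
have o12 : aa c x y <= c (ww c x y) by nrm Hanti Hinv; lat 6.
have o13 : ww c x y <= bb c x y by nrm Hanti Hinv; lat 6.
have o14 : ww c x y <= c (aa c x y) by nrm Hanti Hinv; lat 6.
have o15 : c (bb c x y) <= c (ww c x y) by nrm Hanti Hinv; lat 6.
have o16 : c (bb c x y) <= c (aa c x y) by nrm Hanti Hinv; lat 6.
have M1 : aa c x y `&` ww c x y = zero_xy c x y.
  apply/le_anti/andP; split; last by rewrite lexI hza o1.
  by rewrite -K1a; apply: leI2.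
have M2 : aa c x y `&` c (bb c x y) = zero_xy c x y.
  apply/le_anti/andP; split; last by rewrite lexI hza o2.
  by rewrite -K1b; apply: leI2.
have M4 : ww c x y `&` c (bb c x y) = zero_xy c x y.
  apply/le_anti/andP; split; last by rewrite lexI o1 o2.
  by rewrite -K1b; apply: leI2.
have M5 : ww c x y `&` c (ww c x y) = zero_xy c x y by exact: esym E2.
have M7 : bb c x y `&` c (ww c x y) = aa c x y.
  apply/le_anti/andP; split; last by nrm Hanti Hinv; lat 6.
  rewrite /aa -K2a; nrm Hanti Hinv; lat 6.
have M9 : c (ww c x y) `&` c (aa c x y) = c (bb c x y).
  apply/le_anti/andP; split; last by nrm Hanti Hinv; lat 6.
  apply: (le_trans (_ : _ <= c x `&` (c y `|` x))); first by nrm Hanti Hinv; lat 6.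
  rewrite K2b; nrm Hanti Hinv; lat 6.
case: i => [[[] []] []]; case: j => [[[] []] []]; rewrite /=;
  first [ by rewrite meetxx
        | by apply/esym/meet_idPl
        | by apply/esym/meet_idPr
        | match goal with H : _ `&` _ = _ |- _ =>
            first [by rewrite H | by rewrite meetC H] end ].
Qed.

Lemma fm_j {disp} {T : tbLatticeType disp} {c : T -> T}
  (Hanti : forall x y : T, x <= y -> c y <= c x) (Hinv : forall x, c (c x) = x)
  (Hsp : super_paraorthomodular c)
  (x y : T) (hxy : x <= y) i j : fm c x y (bj i j) = fm c x y i `|` fm c x y j.
Proof.
by rewrite /bj fm_n // (fm_m Hanti Hinv Hsp _ _ hxy) !fm_n // (cI Hanti Hinv) !Hinv.
Qed.

Lemma fm_img {disp} {T : tbLatticeType disp} {c : T -> T}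
  (Hanti : forall x y : T, x <= y -> c y <= c x) (Hinv : forall x, c (c x) = x)
  (Hsp : super_paraorthomodular c)
  (x y : T) (hxy : x <= y) u :
  gen_local c x y (pi_ c (zero_xy c x y) x) (pi_ c (zero_xy c x y) y) u ->
  exists i, u = fm c x y i.
Proof.
have [zl cz px py _] := basic Hanti Hinv _ _ hxy.
elim.
- by exists (true, false, false); rewrite px.
- by exists (true, true, false); rewrite py.
- by exists (false, false, false).
- by exists (true, true, true); rewrite /= cz.
- move=> ? ? _ [i ->] _ [j ->]; exists (bm i j).
  by rewrite (fm_m Hanti Hinv Hsp _ _ hxy).
- move=> ? ? _ [i ->] _ [j ->]; exists (bj i j).
  by rewrite (fm_j Hanti Hinv Hsp _ _ hxy).
- move=> ? _ [i ->]; exists (bn i); by rewrite fm_n.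
Qed.

Theorem lemma4p8 (disp : Order.disp_t) (T : tbLatticeType disp) (c : T -> T) :
  pseudo_kleene c ->
  (super_paraorthomodular c <->
   (forall x y : T, x <= y ->
      boolean_subalgebra_of_local c x y
        (gen_local c x y (pi_ c (zero_xy c x y) x) (pi_ c (zero_xy c x y) y)))).
Proof.
case=> Hanti [Hinv _]; split.
- move=> Hsp x y hxy.
  have [zl cz px py [Ew hab hza]] := basic Hanti Hinv _ _ hxy.
  have img := fm_img Hanti Hinv Hsp _ _ hxy.
  have fmm := fm_m Hanti Hinv Hsp _ _ hxy.
  have fmj := fm_j Hanti Hinv Hsp _ _ hxy.
  split; [|split; [|split; [|split; [|split; [|split]]]]].
  + move=> u /img [i ->]; rewrite -cz.
    have hy := Hanti _ _ hxy.
    by case: i => [[[] []] []]; split; rewrite /=; nrm Hanti Hinv; lat 6.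
  + exact: gen_0.
  + exact: gen_1.
  + by move=> u v Hu Hv; split; [apply: gen_meet | apply: gen_join].
  + by move=> u Hu; apply: gen_compl.
  + move=> u v w /img [i ->] /img [j ->] /img [k ->].
    rewrite -fmj -!fmm -fmj; congr fm.
    by case: i => [[[] []] []]; case: j => [[[] []] []]; case: k => [[[] []] []].
  + move=> u /img [i ->]; rewrite -fm_n // -fmm.
    by case: i => [[[] []] []].
- move=> H; split.
  + move=> x y hxy Hw.
    have [zl cz px py [Ew hab hza]] := basic Hanti Hinv _ _ hxy.
    have [Hb [Hz [Ho [Hcl [Hc [Hd Hcomp]]]]]] := H x y hxy.
    set S := gen_local c x y _ _ in Hb Hz Ho Hcl Hc Hd Hcomp.
    have Sa : S (aa c x y) by rewrite -px; exact: gen_a.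
    have Sb : S (bb c x y) by rewrite -py; exact: gen_b.
    have Sca := Hc _ Sa.
    have E1 := Hd _ _ _ Sb Sa Sca.
    have Eo : aa c x y `|` c (aa c x y) = one_xy c x y.
      have := Hcomp _ Sca; rewrite Hinv => E.
      by rewrite -cz -E (cI Hanti Hinv) Hinv joinC.
    have [_ hbo] := Hb _ Sb.
    rewrite Eo (meet_idPl hbo) Ew /ww Hw (meet_idPr hab) in E1.
    change (bb c x y = aa c x y).
    by rewrite E1; apply/join_idPl.
  + move=> x y hxy.
    have [zl cz px py [Ew hab hza]] := basic Hanti Hinv _ _ hxy.
    have [Hb [Hz [Ho [Hcl [Hc [Hd Hcomp]]]]]] := H x y hxy.
    set S := gen_local c x y _ _ in Hb Hz Ho Hcl Hc Hd Hcomp.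
    have Sa : S (aa c x y) by rewrite -px; exact: gen_a.
    have Sb : S (bb c x y) by rewrite -py; exact: gen_b.
    have Sca := Hc _ Sa.
    have [Sw _] := Hcl _ _ Sb Sca.
    have := Hcomp _ Sw; rewrite Ew /ww => ->; done.
Qed.
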